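(* Let $0\le\lambda<n$ and $1\le p<\infty$. Each of the subsets $V_0L^{p,\lambda}$, $V_\infty L^{p,\lambda}$ and $V^{(\ast)}L^{p,\lambda}$ is closed in $L^{p,\lambda}(\mathbb{R}^n)$; consequently $V^{(\ast)}_{0,\infty}L^{p,\lambda}$ is closed in $L^{p,\lambda}(\mathbb{R}^n)$.
   Context: $B(x,r)$ is the open ball in $\mathbb{R}^n$ with center $x$ and radius $r$. For $f\in L^1_{\mathrm{loc}}(\mathbb{R}^n)$ let $\mathfrak{M}_{p,\lambda}(f;x,r):=r^{-\lambda}\int_{B(x,r)}|f(y)|^p\,dy$. The homogeneous Morrey space $L^{p,\lambda}(\mathbb{R}^n)$ is the Banach space of $f\in L^p_{\mathrm{loc}}(\mathbb{R}^n)$ with $\|f\|_{p,\lambda}:=\sup_{x\in\mathbb{R}^n,\,r>0}\mathfrak{M}_{p,\lambda}(f;x,r)^{1/p}<\infty$. Define the subsets of $L^{p,\lambda}(\mathbb{R}^n)$: $V_0L^{p,\lambda}=\{f:\lim_{r\to0}\sup_{x}\mathfrak{M}_{p,\lambda}(f;x,r)=0\}$; $V_\infty L^{p,\lambda}=\{f:\lim_{r\to\infty}\sup_{x}\mathfrak{M}_{p,\lambda}(f;x,r)=0\}$; $V^{(\ast)}L^{p,\lambda}=\{f:\lim_{N\to\infty}\mathcal{A}_{N,p}(f)=0\}$, where $\mathcal{A}_{N,p}(f):=\sup_{x\in\mathbb{R}^n}\int_{B(x,1)}|f(y)|^p\chi_{\mathbb{R}^n\setminus B(0,N)}(y)\,dy$,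 $N\in\mathbb{N}$. Finally $V^{(\ast)}_{0,\infty}L^{p,\lambda}:=V_0L^{p,\lambda}\cap V_\infty L^{p,\lambda}\cap V^{(\ast)}L^{p,\lambda}$. *)

(* Defs.v *)
From HB Require Import structures.
From mathcomp Require Import all_boot all_order all_algebra.
From mathcomp Require Import all_classical all_reals all_analysis.
Set Implicit Arguments. Unset Strict Implicit. Unset Printing Implicit Defensive.
Import Order.TTheory GRing.Theory Num.Theory.
Import numFieldNormedType.Exports.
Local Open Scope classical_set_scope.
Local Open Scope ring_scope.
Local Notation lt := (fun a b : \bar _ => (a < b)%E).

Section Morrey.
Variable R : realType.

(* Lebesgue integral over R^n of a nonnegative extended-real function,
   computed as the iterated integral w.r.t. the 1-dimensional Lebesgue
   measure (equal to the integral for the n-dimensional Lebesgue measure by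
   Tonelli's theorem for nonnegative measurable integrands). *)
Fixpoint iint (n : nat) : (n.-tuple R -> \bar R) -> \bar R :=
  match n return (n.-tuple R -> \bar R) -> \bar R with
  | 0 => fun g => g [tuple]
  | m.+1 => fun g =>
      (\int[@lebesgue_measure R]_(x in setT) iint (fun t : m.-tuple R => g (cons_tuple x t)))%E
  end.

Definition iint_on (n : nat) (A : set (n.-tuple R)) (g : n.-tuple R -> \bar R) : \bar R :=
  iint (fun y => ((\1_A y)%:E * g y)%E).

Definition eball (n : nat) (x : n.-tuple R) (r : R) : set (n.-tuple R) :=
  [set y | \sum_(i < n) (tnth y i - tnth x i) ^+ 2 < r ^+ 2].

Definition morreyM (n : nat) (p lam : R) (f : n.-tuple R -> R) (x : n.-tuple R) (r : R)
  : \bar R :=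
  ((r `^ (- lam))%:E * iint_on (eball x r) (fun y => (`|f y| `^ p)%:E))%E.

Definition morrey_norm (n : nat) (p lam : R) (f : n.-tuple R -> R) : \bar R :=
  ereal_sup [set (morreyM p lam f x r `^ (p^-1))%E | x in [set: n.-tuple R] & r in [set r | 0 < r]].

Definition morrey (n : nat) (p lam : R) (f : n.-tuple R -> R) : Prop :=
  measurable_fun setT f /\ (morrey_norm p lam f < +oo)%E.

Definition supM (n : nat) (p lam : R) (f : n.-tuple R -> R) (r : R) : \bar R :=
  ereal_sup [set morreyM p lam f x r | x in [set: n.-tuple R]].

Definition V0 (n : nat) (p lam : R) : set (n.-tuple R -> R) :=
  [set f | morrey p lam f /\ supM p lam f r @[r --> 0^'+] --> 0%E].

Definition Vinfty (n : nat) (p lam : R) : set (n.-tuple R -> R) :=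
  [set f | morrey p lam f /\ supM p lam f r @[r --> +oo] --> 0%E].

Definition AN (n : nat) (p : R) (f : n.-tuple R -> R) (N : nat) : \bar R :=
  ereal_sup [set iint_on (eball x 1)
                (fun y => (`|f y| `^ p * \1_(~` eball [tuple of nseq n 0] N%:R) y)%:E)
            | x in [set: n.-tuple R]].

Definition Vstar (n : nat) (p lam : R) : set (n.-tuple R -> R) :=
  [set f | morrey p lam f /\ AN p f N @[N --> \oo] --> 0%E].

Definition V0inftystar (n : nat) (p lam : R) : set (n.-tuple R -> R) :=
  V0 p lam `&` Vinfty p lam `&` Vstar p lam.

Definition morrey_closed (n : nat) (p lam : R) (V : set (n.-tuple R -> R)) : Prop :=
  forall f : n.-tuple R -> R, morrey p lam f ->
    (forall e : R, 0 < e -> exists2 g, V g & lt (morrey_norm p lam (f \- g)) e%:E) ->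
    V f.

End Morrey.

(* Main.v *)
Require Import Defs.
From HB Require Import structures.
From mathcomp Require Import all_boot all_order all_algebra.
From mathcomp Require Import all_classical all_reals all_analysis.
Set Implicit Arguments. Unset Strict Implicit. Unset Printing Implicit Defensive.
Import Order.TTheory GRing.Theory Num.Theory.
Import numFieldNormedType.Exports.
Local Open Scope classical_set_scope.
Local Open Scope ring_scope.
From mathcomp Require Import measurable_realfun.
From mathcomp Require Import ring.
Set Printing Width 200.
Section P.
Variable R : realType.
Lemma pow_ineq (p a b : R) : (0 <= p)%R ->
  (`|a| `^ p <= 2 `^ p * (`|a - b| `^ p + `|b| `^ p))%R.
Proof.
move=> p0.
set m := Num.max `|a - b| `|b|.
have m0 : (0 <= m)%R by rewrite le_max normr_ge0.
have am : (`|a| <= 2 * m)%R.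
  have -> : a = (a - b) + b by rewrite subrK.
  apply: (le_trans (ler_normD _ _)).
  rewrite mulr2n mulrDl mul1r lerD //.
    by rewrite le_max lexx.
  by rewrite le_max lexx orbT.
apply: (le_trans (ge0_ler_powR p0 _ _ am)); rewrite ?nnegrE ?mulr_ge0 //.
rewrite powRM //; apply: ler_wpM2l; first exact: powR_ge0.
rewrite /m; case: (leP `|a - b| `|b|) => _.
  by rewrite lerDr powR_ge0.
by rewrite lerDl powR_ge0.
Qed.
End P.

Section S.
Variable R : realType.
Local Open Scope ereal_scope.

Lemma iint_ge0 n (h : n.-tuple R -> \bar R) : (forall y, 0 <= h y) -> 0 <= iint h.
Proof.
elim: n h => [|n IH] h h0 /=; first exact: h0.
by apply: integral_ge0 => x _; exact: IH.
Qed.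

Lemma mcons n : measurable_fun setT (fun z : R * n.-tuple R => cons_tuple z.1 z.2).
Proof. exact: (measurable_cons measurable_fst measurable_snd). Qed.

Lemma iint_mfun n : forall d (X : measurableType d) (h : X * n.-tuple R -> \bar R),
  measurable_fun [set: X * n.-tuple R] h -> (forall z, 0 <= h z) ->
  measurable_fun setT (fun x => iint (fun t => h (x,t))).
Proof.
elim: n => [|n IH] d X h mh h0 /=.
  apply: measurableT_comp => //; apply: measurable_fun_pair => //; exact: measurable_cst.
pose k := fun z : (X * R) * n.-tuple R => h (z.1.1, cons_tuple z.1.2 z.2).
have mk : measurable_fun setT k.
  apply: measurableT_comp => //; apply: measurable_fun_pair.
    exact: measurableT_comp.
  apply: (measurable_cons (T1 := ((X * R) * n.-tuple R)%type)).
    exact: measurableT_comp.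
  exact: measurable_snd.
have := IH _ _ k mk (fun z => h0 _).
move=> mF.
have := @measurable_fun_fubini_tonelli_F _ _ X (measurableTypeR R) R (@lebesgue_measure R)
  (fun z => iint (fun t => k (z, t))) mF (fun z => iint_ge0 (fun _ => h0 _)).
by [].
Qed.

Lemma mcons_h n (h : n.+1.-tuple R -> \bar R) : measurable_fun setT h ->
  measurable_fun [set: R * n.-tuple R] (fun z => h (cons_tuple z.1 z.2)).
Proof. by move=> mh; apply: measurableT_comp => //; exact: mcons. Qed.

Lemma msec n (h : n.+1.-tuple R -> \bar R) : measurable_fun setT h -> (forall y, 0 <= h y) ->
  measurable_fun [set: measurableTypeR R] (fun x => iint (fun t => h (cons_tuple x t))).
Proof.
move=> mh h0.
exact: (@iint_mfun n _ R (fun z => h (cons_tuple z.1 z.2)) (mcons_h mh) (fun _ => h0 _)).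
Qed.

Lemma mconsx n (x : R) (h : n.+1.-tuple R -> \bar R) : measurable_fun setT h ->
  measurable_fun [set: n.-tuple R] (fun t => h (cons_tuple x t)).
Proof.
move=> mh; apply: measurableT_comp => //.
have := @measurable_cons _ _ (n.-tuple R) R (fun _ => x) n id (measurable_cst x) (@measurable_id _ _ setT).
by [].
Qed.

Lemma iint_le n (h1 h2 : n.-tuple R -> \bar R) :
  measurable_fun setT h1 -> measurable_fun setT h2 ->
  (forall y, 0 <= h1 y) -> (forall y, h1 y <= h2 y) -> iint h1 <= iint h2.
Proof.
elim: n h1 h2 => [|n IH] h1 h2 m1 m2 h10 h12 /=; first exact: h12.
have h20 y : 0 <= h2 y by apply: le_trans (h12 y).
apply: ge0_le_integral => //.
- by move=> x _; apply: iint_ge0.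
- exact: msec.
- exact: msec.
- move=> x _; apply: IH => //.
  + exact: mconsx.
  + exact: mconsx.
Qed.

Lemma iint_add n (h1 h2 : n.-tuple R -> \bar R) :
  measurable_fun setT h1 -> measurable_fun setT h2 ->
  (forall y, 0 <= h1 y) -> (forall y, 0 <= h2 y) -> iint (fun y => h1 y + h2 y) = iint h1 + iint h2.
Proof.
elim: n h1 h2 => [|n IH] h1 h2 m1 m2 h10 h20 //=.
rewrite -ge0_integralD //.
- apply: eq_integral => x _; apply: IH => //.
  + exact: mconsx.
  + exact: mconsx.
- by move=> x _; apply: iint_ge0.
- exact: msec.
- by move=> x _; apply: iint_ge0.
- exact: msec.
Qed.

Lemma iint_scale n (c : R) (h : n.-tuple R -> \bar R) : (0 <= c)%R ->
  measurable_fun setT h -> (forall y, 0 <= h y) -> iint (fun y => c%:E * h y) = c%:E * iint h.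
Proof.
move=> c0; elim: n h => [|n IH] h m h0 //=.
rewrite -ge0_integralZl_EFin //.
- apply: eq_integral => x _; apply: IH => //.
  exact: mconsx.
- by move=> x _; apply: iint_ge0.
- exact: msec.
Qed.



Definition J n (p : R) (w u : n.-tuple R -> R) := iint (fun y => (w y * `|u y| `^ p)%:E).

Lemma mJ n p (w u : n.-tuple R -> R) : measurable_fun setT w -> measurable_fun setT u ->
  measurable_fun setT (fun y => (w y * `|u y| `^ p)%:E).
Proof.
move=> mw mu; apply/measurable_EFinP; apply: measurable_funM => //.
apply: measurableT_comp (measurable_powR p) _.
exact: measurableT_comp (@normr_measurable R setT) mu.
Qed.

Lemma J0 n p (w u : n.-tuple R -> R) y : (forall y, 0 <= w y)%R -> 0 <= (w y * `|u y| `^ p)%:E.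
Proof. by move=> w0; rewrite lee_fin mulr_ge0 // powR_ge0. Qed.

Lemma key n p (w u v : n.-tuple R -> R) : (0 <= p)%R -> (forall y, 0 <= w y)%R ->
  measurable_fun setT w -> measurable_fun setT u -> measurable_fun setT v ->
  J p w u <= (2 `^ p)%:E * (J p w (u \- v)%R + J p w v).
Proof.
move=> p0 w0 mw mu mv.
have muv : measurable_fun setT (u \- v)%R by exact: measurable_funB.
rewrite /J -iint_add; first last.
- by move=> y; exact: J0.
- by move=> y; exact: J0.
- exact: mJ.
- exact: mJ.
rewrite -iint_scale; first last.
- by move=> y; rewrite adde_ge0 //; exact: J0.
- by apply: emeasurable_funD; exact: mJ.
- exact: powR_ge0.
apply: iint_le.
- exact: mJ.
- apply: emeasurable_funM; first exact: measurable_cst.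
  by apply: emeasurable_funD; exact: mJ.
- by move=> y; exact: J0.
move=> y; rewrite -EFinD -EFinM lee_fin -mulrDr mulrCA.
by apply: ler_wpM2l => //; exact: pow_ineq.
Qed.

Lemma meball n (x : n.-tuple R) r : measurable (eball x r).
Proof.
pose phi := fun y : n.-tuple R => (\sum_(i < n) (tnth y i - tnth x i) ^+ 2)%R.
have mphi : measurable_fun setT phi.
  apply: measurable_sum => i; apply: measurable_funX.
  apply: measurable_funB; first exact: measurable_tnth.
  exact: measurable_cst.
have := mphi measurableT _ (measurable_itv `]-oo, (r ^+ 2)%R[).
rewrite setTI; congr measurable; apply/seteqP; split => y /=;
  by rewrite in_itv /=.
Qed.

Lemma ind_ge0 T (A : set T) y : (0 <= \1_A y :> R)%R.
Proof. by rewrite indicE; case: (_ \in _). Qed.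

Lemma ind_le1 T (A : set T) y : (\1_A y <= 1 :> R)%R.
Proof. by rewrite indicE; case: (_ \in _). Qed.

Lemma M_J n p lam (u : n.-tuple R -> R) x r :
  morreyM p lam u x r = (r `^ (- lam))%:E * J p (\1_(eball x r)) u.
Proof.
by rewrite /morreyM /iint_on /J; congr (_ * iint _).
Qed.

Lemma M_ge0 n p lam (u : n.-tuple R -> R) x r : 0 <= morreyM p lam u x r.
Proof.
rewrite M_J mule_ge0 ?lee_fin ?powR_ge0 //; apply: iint_ge0 => y.
by apply: J0 => z; exact: ind_ge0.
Qed.

Lemma norm_lt n p lam (u : n.-tuple R -> R) e x r : (0 < p)%R -> (0 < r)%R ->
  morrey_norm p lam u < e%:E -> morreyM p lam u x r < (e `^ p)%:E.
Proof.
move=> p0 r0 hu.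
have M0 := M_ge0 p lam u x r.
have Mle : morreyM p lam u x r `^ p^-1 <= morrey_norm p lam u.
  by apply: ereal_sup_ubound; exists x => //; exists r.
have e0 : (0 < e)%R.
  rewrite -lte_fin; apply: le_lt_trans hu; apply: le_trans Mle; exact: poweR_ge0.
rewrite ltNge; apply/negP => H.
have h : ((e `^ p)%:E) `^ p^-1 <= morreyM p lam u x r `^ p^-1.
  apply: gt0_ler_poweR => //.
  - by rewrite invr_ge0 ltW.
  - by rewrite in_itv /= leey andbT lee_fin powR_ge0.
  - by rewrite in_itv /= leey andbT M0.
move: h; rewrite poweR_EFin -powRrM mulfV ?gt_eqF // powRr1 ?(ltW e0) // => h.
have := le_lt_trans (le_trans h Mle) hu.
by rewrite ltxx.
Qed.

Lemma cvge0P I (F : set_system I) (FF : Filter F) (h : I -> \bar R) : (forall i, 0 <= h i) ->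
  (forall e, (0 < e)%R -> \forall i \near F, h i <= e%:E) -> h i @[i --> F] --> 0.
Proof.
move=> h0 H; apply/fine_cvgP; split.
  have := H 1%R ltr01; apply: filterS => i hi.
  by rewrite ge0_fin_numE // (le_lt_trans hi (ltry _)).
apply/cvgrPdist_le => e e0.
have := H e e0; apply: filterS => i hi.
have fi : h i \is a fin_num by rewrite ge0_fin_numE // (le_lt_trans hi (ltry _)).
rewrite sub0r normrN /= ger0_norm ?fine_ge0 //.
by rewrite -lee_fin fineK.
Qed.

Lemma cvge0_le I (F : set_system I) (FF : Filter F) (h : I -> \bar R) :
  h i @[i --> F] --> 0 -> forall e, (0 < e)%R -> \forall i \near F, h i <= e%:E.
Proof.
move/fine_cvgP => [hfin hc] e e0.
move/cvgrPdist_le : hc => /(_ e e0) hc.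
apply: filterS2 hfin hc => i fi; rewrite sub0r normrN => h'.
by rewrite -(fineK fi) lee_fin; apply: le_trans (ler_norm _) h'.
Qed.

Lemma closed_gen n p lam I (F : set_system I) (FF : Filter F)
  (Q : (n.-tuple R -> R) -> I -> n.-tuple R -> \bar R) (f : n.-tuple R -> R) :
  (0 < p)%R -> (forall u i x, 0 <= Q u i x) ->
  (forall g e, (0 < e)%R -> morrey_norm p lam (f \- g)%R < e%:E -> morrey p lam g ->
     \forall i \near F, forall x, Q f i x <= (2 `^ p)%:E * ((e `^ p)%:E + Q g i x)) ->
  (forall e, (0 < e)%R -> exists2 g, (morrey p lam g /\
     ereal_sup [set Q g i x | x in setT] @[i --> F] --> 0) & morrey_norm p lam (f \- g)%R < e%:E) ->
  ereal_sup [set Q f i x | x in setT] @[i --> F] --> 0.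
Proof.
move=> p0 Q0 HQ H.
have S0 u i : 0 <= ereal_sup [set Q u i x | x in setT].
  apply: le_trans (Q0 u i [tuple of nseq n 0%R]) _.
  by apply: ereal_sup_ubound; exists [tuple of nseq n 0%R].
apply: cvge0P => // eps eps0.
set c := (2 `^ p)%R.
have c0 : (0 < c)%R by apply: powR_gt0.
pose d := (eps / (c * 2))%R.
have d0 : (0 < d)%R by rewrite divr_gt0 // mulr_gt0.
pose e := (d `^ p^-1)%R.
have e0 : (0 < e)%R by apply: powR_gt0.
have ep : (e `^ p)%R = d by rewrite /e -powRrM mulVf ?gt_eqF // powRr1 // ltW.
have [g [mg cg] hfg] := H e e0.
have := HQ g e e0 hfg mg.
have := cvge0_le FF cg d0.
apply: filterS2 => i h1 h2.
apply: ge_ereal_sup => _ [x _ <-].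
apply: le_trans (h2 x) _; rewrite ep.
have hg : Q g i x <= d%:E.
  by apply: le_trans h1; apply: ereal_sup_ubound; exists x.
apply: le_trans (lee_wpmul2l _ (leeD2l _ hg)) _; first by rewrite lee_fin ltW.
rewrite -EFinD -EFinM lee_fin le_eqVlt; apply/orP; left; apply/eqP.
rewrite /d -/c; move: (c) c0 => C C0.
have C2 : (C * 2 != 0)%R by rewrite mulf_neq0 // gt_eqF.
field.
by rewrite gt_eqF.
Qed.

Lemma Mbound n p lam (f g : n.-tuple R -> R) e x r : (0 < p)%R -> (0 < r)%R ->
  measurable_fun setT f -> measurable_fun setT g ->
  morrey_norm p lam (f \- g)%R < e%:E ->
  morreyM p lam f x r <= (2 `^ p)%:E * ((e `^ p)%:E + morreyM p lam g x r).
Proof.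
move=> p0 r0 mf mg hfg.
have hM := @norm_lt n p lam _ e x r p0 r0 hfg.
rewrite M_J in hM; rewrite !M_J.
have a0 : 0 <= (r `^ - lam)%:E by rewrite lee_fin powR_ge0.
have w0 : forall y, (0 <= \1_(eball x r) y :> R)%R by move=> y; exact: ind_ge0.
have mw : measurable_fun setT (\1_(eball x r) : _ -> R) by apply: measurable_indic; exact: meball.
apply: le_trans (lee_wpmul2l a0 (key (ltW p0) w0 mw mf mg)) _.
rewrite muleCA ge0_muleDr; first last.
- by apply: iint_ge0 => y; exact: J0.
- by apply: iint_ge0 => y; exact: J0.
apply: lee_wpmul2l; first by rewrite lee_fin powR_ge0.
by apply: leeD2r; exact: ltW.
Qed.

Lemma Abound n p lam (f g : n.-tuple R -> R) e x (C : set (n.-tuple R)) : (0 < p)%R ->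
  measurable C -> measurable_fun setT f -> measurable_fun setT g ->
  morrey_norm p lam (f \- g)%R < e%:E ->
  iint_on (eball x 1) (fun y => (`|f y| `^ p * \1_C y)%:E) <=
  (2 `^ p)%:E * ((e `^ p)%:E + iint_on (eball x 1) (fun y => (`|g y| `^ p * \1_C y)%:E)).
Proof.
move=> p0 mC mf mg hfg.
have hM := @norm_lt n p lam _ e x 1%R p0 ltr01 hfg.
rewrite M_J powR1 mul1e in hM.
pose w := fun y => (\1_(eball x 1) y * \1_C y :> R)%R.
have AJ u : iint_on (eball x 1) (fun y => (`|u y| `^ p * \1_C y)%:E) = J p w u.
  by rewrite /iint_on /J; congr iint; apply: funext => y; rewrite -EFinM mulrA mulrAC.
have w0 : forall y, (0 <= w y)%R by move=> y; rewrite mulr_ge0 // ind_ge0.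
have mB : measurable_fun setT (\1_(eball x 1) : _ -> R) by apply: measurable_indic; exact: meball.
have mw : measurable_fun setT w by apply: measurable_funM => //; exact: measurable_indic.
rewrite !AJ.
apply: le_trans (key (ltW p0) w0 mw mf mg) _.
apply: lee_wpmul2l; first by rewrite lee_fin powR_ge0.
apply: leeD2r; apply: le_trans (ltW hM).
have mfg : measurable_fun setT (f \- g)%R by exact: measurable_funB.
apply: iint_le; [exact: mJ|exact: mJ|by move=> y; exact: J0|].
move=> y; rewrite lee_fin; apply: ler_wpM2r; first exact: powR_ge0.
by rewrite /w -[leRHS]mulr1 ler_wpM2l // ?ind_ge0 ?ind_le1.
Qed.
End S.

Theorem lemma3p7 (R : realType) (n : nat) (lam p : R) :
  0 <= lam -> lam < n%:R -> 1 <= p ->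
  [/\ @morrey_closed R n p lam (@V0 R n p lam),
      @morrey_closed R n p lam (@Vinfty R n p lam),
      @morrey_closed R n p lam (@Vstar R n p lam)
    & @morrey_closed R n p lam (@V0inftystar R n p lam)].
Proof.
move=> lam0 lamn p1.
have p0 : 0 < p by apply: lt_le_trans p1.
have c0 : @morrey_closed R n p lam (@V0 R n p lam).
  move=> f mf H; split => //.
  have := (@closed_gen R n p lam R (0%R^'+) _ (fun u r x => morreyM p lam u x r) f p0).
  rewrite /supM. move=> X; apply: X.
  - by move=> *; exact: M_ge0.
  - move=> g e e0 hfg mg; have := @nbhs_right_gt R 0; apply: filterS => r r0 x.
    by apply: Mbound => //; [exact: mf.1 | exact: mg.1].
  - by move=> e e0; have [g [mg cg] hfg] := H e e0; exists g.
have c1 : @morrey_closed R n p lam (@Vinfty R n p lam).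
  move=> f mf H; split => //.
  apply: (@closed_gen R n p lam R (+oo) _ (fun u r x => morreyM p lam u x r) f p0).
  - by move=> *; exact: M_ge0.
  - move=> g e e0 hfg mg; have := @nbhs_pinfty_gt R 0 (num_real 0); apply: filterS => r r0 x.
    by apply: Mbound => //; [exact: mf.1 | exact: mg.1].
  - by move=> e e0; have [g [mg cg] hfg] := H e e0; exists g.
have c2 : @morrey_closed R n p lam (@Vstar R n p lam).
  move=> f mf H; split => //.
  apply: (@closed_gen R n p lam nat \oo _ (fun u N x => iint_on (eball x 1)
     (fun y => (`|u y| `^ p * \1_(~` eball [tuple of nseq n 0] N%:R) y)%:E)) f p0).
  - move=> u N x; apply: iint_ge0 => y.
    by rewrite mule_ge0 // lee_fin ?ind_ge0 // mulr_ge0 ?ind_ge0 ?powR_ge0.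
  - move=> g e e0 hfg mg; apply: nearW => N x.
    apply: (Abound (lam := lam) _ p0 _ _ _ hfg).
    - by apply: measurableC; exact: meball.
    - exact: mf.1.
    - exact: mg.1.
  - by move=> e e0; have [g [mg cg] hfg] := H e e0; exists g.
split => //.
move=> f mf H; split; [split|].
- apply: c0 => // e e0; have [g [[[? ?] ?] ?] ?] := H e e0; by exists g.
- apply: c1 => // e e0; have [g [[? ?] ?] ?] := H e e0; by exists g.
- apply: c2 => // e e0; have [g [? ?] ?] := H e e0; by exists g.
Qed.
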